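(* Let $s\ge1$ and $k\ge1$ be fixed integers. (a) Let $P_n\ge s$ be positive integers and $t_n\in[0,1]$ with $\frac{1}{s!}t_n^{2s}P_n^{s}=\frac{\ln n+(k-1)\ln\ln n+\beta_n}{n}$ and $\lim_{n\to\infty}\beta_n=-\infty$. Then there exist $\widetilde{t_n},\widetilde{P_n}$ with $\frac{1}{s!}\widetilde{t_n}^{2s}\widetilde{P_n}^{s}=\frac{\ln n+(k-1)\ln\ln n+\widetilde{\beta_n}}{n}$, $\lim_{n\to\infty}\widetilde{\beta_n}=-\infty$ and $\widetilde{\beta_n}=-O(\ln\ln n)$, such that there is a coupling under which $H_s(n,t_n,P_n)$ is a spanning subgraph of $H_s(n,\widetilde{t_n},\widetilde{P_n})$. (b) Let $P_n\ge s$ be positive integers and $t_n\in[0,1]$ with $\frac{1}{s!}t_n^{2s}P_n^{s}=\frac{\ln n+(k-1)\ln\ln n+\beta_n}{n}$ and $\lim_{n\to\infty}\beta_n=\infty$. Then there exist $\widehat{t_n},\widehat{P_n}$ with $\frac{1}{s!}\widehat{t_n}^{2s}\widehat{P_n}^{s}=\frac{\ln n+(k-1)\ln\ln n+\widehat{\beta_n}}{n}$, $\lim_{n\to\infty}\widehat{\beta_n}=\infty$ and $\widehat{\beta_n}=O(\ln\ln n)$, such that there is a coupling under which $H_s(n,t_n,P_n)$ is a spanning supergraph of $H_s(n,\widehat{t_n},\widehat{P_n})$.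
   Context: The binomial random $s$-intersection graph $H_s(n,t_n,P_n)$ has $n$ vertices and a pool of $P_n$ distinct items; each item is assigned to each vertex independently with probability $t_n$, and two vertices are adjacent iff they share at least $s$ items. A coupling of two random graphs $G_1,G_2$ on the same vertex set is a probability space carrying random graphs $G_1',G_2'$ with the distributions of $G_1,G_2$ respectively; ''$G_1$ is a spanning subgraph (resp. supergraph) of $G_2$ under the coupling'' means $G_1'$ is a spanning subgraph (resp. supergraph) of $G_2'$ almost surely. *)

(* Defs.v *)
From HB Require Import structures.
From mathcomp Require Import all_boot all_order all_algebra.
From mathcomp Require Import all_classical all_reals all_analysis.
Set Implicit Arguments. Unset Strict Implicit. Unset Printing Implicit Defensive.
Import Order.TTheory GRing.Theory Num.Theory.
Local Open Scope ring_scope.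

Definition graph (n : nat) := {ffun 'I_n -> {set 'I_n}}.

Definition assignment (n P : nat) := {ffun 'I_n -> {set 'I_P}}.

(* Probability of an assignment in the binomial model: each item is assigned
   to each vertex independently with probability t. *)
Definition assign_prob (R : realType) (n P : nat) (t : R) (S : assignment n P) : R :=
  \prod_(v : 'I_n) (t ^+ #|S v| * (1 - t) ^+ (P - #|S v|)).

Definition sint_graph (n P s : nat) (S : assignment n P) : graph n :=
  [ffun i => [set j | (i != j) && (s <= #|S i :&: S j|)%N]].

Definition Hs_pmf (R : realType) (s n : nat) (t : R) (P : nat) : graph n -> R :=
  fun g => \sum_(S : assignment n P | sint_graph s S == g) assign_prob t S.

Definition spanning_subgraph (n : nat) (g1 g2 : graph n) : Prop :=
  forall i : 'I_n, g1 i \subset g2 i.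

Definition coupling_subgraph (R : realType) (n : nat) (mu1 mu2 : graph n -> R) : Prop :=
  exists nu : graph n * graph n -> R,
    [/\ forall p, 0 <= nu p,
        forall g1, \sum_(g2 : graph n) nu (g1, g2) = mu1 g1,
        forall g2, \sum_(g1 : graph n) nu (g1, g2) = mu2 g2 &
        forall p, nu p != 0 -> spanning_subgraph p.1 p.2].

Definition scaling_eq (R : realType) (s k n : nat) (t : R) (P : nat) (beta : R) : Prop :=
  (s`!%:R)^-1 * t ^+ (2 * s) * (P%:R) ^+ s
  = (ln (n%:R) + (k.-1)%:R * ln (ln (n%:R)) + beta) / n%:R.

Arguments Hs_pmf {R} s n t P _.

(* Main.v *)
Require Import Defs.
From HB Require Import structures.
From mathcomp Require Import ring lra.
From mathcomp Require Import zify.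
From mathcomp Require Import all_boot all_order all_algebra.
From mathcomp Require Import all_classical all_reals all_analysis.
Import Order.TTheory GRing.Theory Num.Theory.
Local Open Scope classical_set_scope.
Local Open Scope ring_scope.
Set Implicit Arguments. Unset Strict Implicit.

Definition cf (R : realType) (t1 t2 : R) (a b : bool) : R :=
  if a then (if b then t1 else 0) else (if b then t2 - t1 else 1 - t2).
Definition cw (R : realType) (t1 t2 : R) (P : nat) (A B : {set 'I_P}) : R :=
  \prod_(x : 'I_P) cf t1 t2 (x \in A) (x \in B).
Definition cW (R : realType) (t1 t2 : R) (n P : nat) (S S' : assignment n P) : R :=
  \prod_(v : 'I_n) cw t1 t2 (S v) (S' v).

Lemma sum_sets (R : realType) P (g : 'I_P -> bool -> R) :
  \sum_(B : {set 'I_P}) \prod_(x : 'I_P) g x (x \in B) = \prod_(x : 'I_P) (g x true + g x false).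
Proof.
rewrite (eq_bigr (fun x => \sum_(b : bool) g x b)); last by move=> x _; rewrite big_bool.
rewrite bigA_distr_bigA /=.
rewrite (reindex (fun f : {ffun 'I_P -> bool} => finset (fun x => f x))) /=.
  by apply: eq_bigr => f _; apply: eq_bigr => x _; rewrite inE.
exists (fun B : {set 'I_P} => [ffun x => x \in B]) => [f _ | B _].
  by apply/ffunP => x; rewrite ffunE inE.
by apply/setP => x; rewrite inE ffunE.
Qed.

Lemma prod_if (R : realType) P (A : {set 'I_P}) (a b : R) :
  \prod_(x : 'I_P) (if x \in A then a else b) = a ^+ #|A| * b ^+ (P - #|A|).
Proof.
rewrite (bigID (fun x => x \in A)) /=.
rewrite (eq_bigr (fun=> a)); last by move=> x ->.
rewrite [X in _ * X](eq_bigr (fun=> b)); last by move=> x Hx; rewrite (negbTE Hx).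
rewrite prodr_const.
have -> : \prod_(i | i \notin A) b = \prod_(i in ~: A) b.
  by apply: eq_bigl => x; rewrite inE.
rewrite prodr_const; congr (_ * _); congr (_ ^+ _).
have := cardsC A; rewrite card_ord => HP.
have hA : (#|A| <= P)%N by apply: (leq_trans (max_card A)); rewrite card_ord.
by apply/eqP; rewrite -(eqn_add2l #|A|) HP subnKC.
Qed.

Lemma cw_sum1 (R : realType) (t1 t2 : R) P (A : {set 'I_P}) :
  \sum_B cw t1 t2 A B = t1 ^+ #|A| * (1 - t1) ^+ (P - #|A|).
Proof.
rewrite /cw (sum_sets (fun x b => cf t1 t2 (x \in A) b)) -prod_if.
apply: eq_bigr => x _; rewrite /cf; case: (x \in A) => /=.
  by rewrite addr0.
by rewrite addrC addrA subrK.
Qed.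

Lemma cw_sum2 (R : realType) (t1 t2 : R) P (B : {set 'I_P}) :
  \sum_A cw t1 t2 A B = t2 ^+ #|B| * (1 - t2) ^+ (P - #|B|).
Proof.
rewrite /cw (sum_sets (fun x a => cf t1 t2 a (x \in B))) -prod_if.
apply: eq_bigr => x _; rewrite /cf; case: (x \in B) => /=.
  by rewrite addrC subrK.
by rewrite add0r.
Qed.

Lemma cW_sum1 (R : realType) (t1 t2 : R) n P (S : assignment n P) :
  \sum_(S' : assignment n P) cW t1 t2 S S' = assign_prob t1 S.
Proof.
rewrite /assign_prob -(eq_bigr _ (fun v _ => cw_sum1 t1 t2 (S v))).
by rewrite bigA_distr_bigA.
Qed.

Lemma cW_sum2 (R : realType) (t1 t2 : R) n P (S' : assignment n P) :
  \sum_(S : assignment n P) cW t1 t2 S S' = assign_prob t2 S'.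
Proof.
rewrite /assign_prob -(eq_bigr _ (fun v _ => cw_sum2 t1 t2 (S' v))).
by rewrite bigA_distr_bigA.
Qed.

Lemma coupling_mono (R : realType) s n P (t1 t2 : R) :
  0 <= t1 -> t1 <= t2 -> t2 <= 1 ->
  coupling_subgraph (Hs_pmf s n t1 P) (Hs_pmf s n t2 P).
Proof.
move=> h0 h12 h2.
pose nu := fun p : graph n * graph n =>
  \sum_(S : assignment n P | sint_graph s S == p.1)
    \sum_(S' : assignment n P | sint_graph s S' == p.2) cW t1 t2 S S'.
have cf_ge0 : forall a b, 0 <= cf t1 t2 a b.
  by move=> [] [] /=; rewrite ?subr_ge0 // ?lexx.
exists nu; split.
- move=> p; apply: sumr_ge0 => S _; apply: sumr_ge0 => S' _.
  apply: prodr_ge0 => v _; apply: prodr_ge0 => x _; exact: cf_ge0.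
- move=> g1; rewrite /nu /Hs_pmf /= exchange_big /=.
  apply: eq_bigr => S _.
  by rewrite -(cW_sum1 t1 t2) [RHS](partition_big (@sint_graph n P s) predT).
- move=> g2; rewrite /nu /Hs_pmf /=.
  transitivity (\sum_(S : assignment n P) \sum_(S' | sint_graph s S' == g2) cW t1 t2 S S').
    by rewrite [RHS](partition_big (@sint_graph n P s) predT).
  rewrite exchange_big /=; apply: eq_bigr => S' _; exact: cW_sum2.
- move=> [g1 g2] /= Hnz.
  case: (boolP [exists S : assignment n P, exists S' : assignment n P,
     [&& sint_graph s S == g1, sint_graph s S' == g2 & cW t1 t2 S S' != 0]]).
  + move=> /existsP [S /existsP [S' /and3P [/eqP <- /eqP <- HW]]].
    have sub : forall v, S v \subset S' v.
      move=> v; move/prodf_neq0: HW => /(_ v isT) /prodf_neq0 Hw.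
      apply/fintype.subsetP => x xS; have := Hw x isT; rewrite /cf xS.
      by case: (x \in S' v); rewrite ?eqxx.
    move=> i; apply/fintype.subsetP => j; rewrite /sint_graph !ffunE !inE => /andP [-> hs] /=.
    apply: (leq_trans hs); apply: subset_leq_card; exact: finset.setISS.
  + move=> Hno; exfalso; move/eqP: Hnz; apply; rewrite /nu.
    apply: big1 => S HS; apply: big1 => S' HS'.
    apply/eqP; apply: contraNT Hno => HW; apply/existsP; exists S; apply/existsP; exists S'.
    by rewrite HS HS' HW.
Qed.
Definition LL (R : realType) (k n : nat) : R := ln (n%:R) + (k.-1)%:R * ln (ln (n%:R)).
Arguments LL {R}.

Lemma rootK (R : realType) m (c : R) : 0 <= c -> (0 < m)%N -> (c `^ (m%:R)^-1) ^+ m = c.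
Proof.
move=> c0 m0; rewrite -powR_mulrn ?powR_ge0 // -powRrM mulVf ?powRr1 //.
by rewrite pnatr_eq0 -lt0n.
Qed.

Lemma rootX (R : realType) m (c : R) : 0 <= c -> (0 < m)%N -> (c ^+ m) `^ (m%:R)^-1 = c.
Proof.
move=> c0 m0; rewrite -powR_mulrn // -powRrM mulfV ?powRr1 //.
by rewrite pnatr_eq0 -lt0n.
Qed.

Lemma scal_bounds (R : realType) s k n (t : R) P beta :
  (0 < n)%N -> scaling_eq s k n t P beta -> 0 <= t <= 1 ->
  0 <= LL k n + beta <= n%:R * P%:R ^+ s / s`!%:R.
Proof.
move=> n0 H /andP [t0 t1].
have nz : n%:R != 0 :> R by rewrite pnatr_eq0 -lt0n.
have fz : s`!%:R != 0 :> R by rewrite pnatr_eq0 -lt0n fact_gt0.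
have E : LL k n + beta = n%:R * ((s`!%:R)^-1 * t ^+ (2 * s) * P%:R ^+ s).
  rewrite H /LL; field; exact: nz.
have x0 : 0 <= t ^+ (2 * s) by rewrite exprn_ge0.
have x1 : t ^+ (2 * s) <= 1 by rewrite exprn_ile1.
rewrite E; apply/andP; split.
  by rewrite !mulr_ge0 ?invr_ge0 ?exprn_ge0.
rewrite mulrCA !mulrA [X in _ <= X]mulrAC ler_wpM2r ?exprn_ge0 //.
rewrite mulrAC [X in _ <= X]mulrC -[X in _ <= X]mulr1.
by apply: ler_wpM2l => //; rewrite mulr_ge0 ?invr_ge0.
Qed.

Lemma construct (R : realType) s k (t : nat -> R) (P : nat -> nat) (beta bb : nat -> R) :
  (1 <= s)%N -> (forall n, (s <= P n)%N) -> (forall n, 0 <= t n <= 1) ->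
  (forall n, (0 < n)%N -> scaling_eq s k n (t n) (P n) (beta n)) ->
  (forall n, (0 < n)%N -> 0 <= LL k n + bb n <= n%:R * (P n)%:R ^+ s / s`!%:R) ->
  exists tt : nat -> R,
   [/\ forall n, 0 <= tt n <= 1,
       forall n, (0 < n)%N -> scaling_eq s k n (tt n) (P n) (bb n),
       forall n, (0 < n)%N -> beta n <= bb n -> t n <= tt n,
       forall n, (0 < n)%N -> bb n <= beta n -> tt n <= t n &
       tt 0%N = t 0%N].
Proof.
move=> hs hP ht hsc hbb.
pose m := (2 * s)%N.
have m0 : (0 < m)%N by rewrite /m; lia.
pose y n : R := n%:R * (P n)%:R ^+ s / s`!%:R.
pose c n := (LL k n + bb n) / y n.
exists (fun n => if n == 0%N then t n else c n `^ (m%:R)^-1).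
have fz : s`!%:R != 0 :> R by rewrite pnatr_eq0 -lt0n fact_gt0.
have y0 : forall n, (0 < n)%N -> 0 < y n.
  move=> n n0; rewrite /y divr_gt0 ?ltr0n ?fact_gt0 // mulr_gt0 ?ltr0n ?exprn_gt0 ?ltr0n //.
  exact: leq_trans hs (hP n).
have tm : forall n, (0 < n)%N -> t n ^+ m = (LL k n + beta n) / y n.
  move=> n n0; have := hsc n n0; rewrite /scaling_eq /y => H.
  have nz : n%:R != 0 :> R by rewrite pnatr_eq0 -lt0n.
  have pz : (P n)%:R ^+ s != 0 :> R.
    by rewrite expf_neq0 // pnatr_eq0 -lt0n; exact: leq_trans hs (hP n).
  have E : LL k n + beta n = n%:R * ((s`!%:R)^-1 * t n ^+ m * (P n)%:R ^+ s).
    by rewrite /m H /LL; field.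
  rewrite E; field; rewrite fz nz pz //.
have c01 : forall n, (0 < n)%N -> 0 <= c n <= 1.
  move=> n n0; have /andP [h0 h1] := hbb n n0; have yp := y0 n n0.
  by rewrite /c ler_pdivrMr // mul1r h1 andbT divr_ge0 // ltW.
have cmono : forall n, (0 < n)%N -> beta n <= bb n -> t n ^+ m <= c n.
  move=> n n0 hb; rewrite tm // /c; apply: ler_wpM2r; first by rewrite invr_ge0 ltW // y0.
  by rewrite lerD2l.
have cmono' : forall n, (0 < n)%N -> bb n <= beta n -> c n <= t n ^+ m.
  move=> n n0 hb; rewrite tm // /c; apply: ler_wpM2r; first by rewrite invr_ge0 ltW // y0.
  by rewrite lerD2l.
have r0 : 0 <= (m%:R : R)^-1 by rewrite invr_ge0 ler0n.
have pw : forall a b : R, 0 <= a -> 0 <= b -> a <= b -> a `^ (m%:R)^-1 <= b `^ (m%:R)^-1.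
  by move=> a b a0 b0 ab; apply: ge0_ler_powR => //; rewrite inE /= ?nnegrE.
split.
- move=> n; case: eqP => [_|/eqP nn]; first exact: ht.
  have n0 : (0 < n)%N by rewrite lt0n.
  have /andP [h0 h1] := c01 n n0.
  rewrite powR_ge0 /=; apply: (le_trans (pw _ _ h0 ler01 h1)).
  by rewrite powR1.
- move=> n n0; rewrite (gtn_eqF n0) /scaling_eq.
  have /andP [h0 h1] := c01 n n0.
  rewrite (@rootK R (2 * s)) //.
  have nz : n%:R != 0 :> R by rewrite pnatr_eq0 -lt0n.
  have pz : (P n)%:R ^+ s != 0 :> R.
    by rewrite expf_neq0 // pnatr_eq0 -lt0n; exact: leq_trans hs (hP n).
  rewrite /c /y /LL; field; rewrite fz nz pz //.
- move=> n n0 hb; rewrite (gtn_eqF n0).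
  have /andP [t0 _] := ht n.
  have /andP [h0 h1] := c01 n n0.
  rewrite -{1}(@rootX R m (t n)) //; apply: pw => //; [exact: exprn_ge0 | exact: cmono].
- move=> n n0 hb; rewrite (gtn_eqF n0).
  have /andP [t0 _] := ht n.
  have /andP [h0 h1] := c01 n n0.
  rewrite -[X in _ <= X](@rootX R m (t n)) //; apply: pw => //; [exact: exprn_ge0 | exact: cmono'].
- by [].
Qed.
Lemma ln_le_sub1 (R : realType) (x : R) : 0 < x -> ln x <= x - 1.
Proof.
move=> x0; have h : -1 < x - 1 by lra.
by have := le_ln1Dx h; rewrite addrC subrK.
Qed.

Lemma ln_le_sqrt (R : realType) (x : R) : 0 < x -> ln x <= 2 * Num.sqrt x.
Proof.
move=> x0; have sx : 0 < Num.sqrt x by rewrite sqrtr_gt0.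
rewrite -{1}(sqr_sqrtr (ltW x0)) lnXn //.
have := ln_le_sub1 sx; rewrite mulr2n; lra.
Qed.

Lemma ev_ln (R : realType) (c : R) : 0 <= c ->
  exists N, forall n, (N <= n)%N -> c * ln (n%:R : R) <= n%:R.
Proof.
move=> c0; exists (Num.Def.trunc (4 * c ^+ 2)).+1 => n hn.
have nx : 4 * c ^+ 2 < n%:R.
  apply: (lt_le_trans (truncnS_gt _)); by rewrite ler_nat.
have c2 : 0 <= c ^+ 2 by rewrite exprn_ge0.
have n0 : 0 < (n%:R : R) by lra.
have q0 : 0 <= Num.sqrt (n%:R : R) by rewrite sqrtr_ge0.
have qq := sqr_sqrtr (ltW n0).
have hl := ln_le_sqrt n0.
have q2 : 2 * c <= Num.sqrt (n%:R : R).
  have e : (2 * c) ^+ 2 = 4 * c ^+ 2 by ring.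
  have := @ler_wsqrtr R ((2 * c) ^+ 2) (n%:R); rewrite sqrtr_sqr ger0_norm ?mulr_ge0 //.
  by apply; rewrite e ltW.
have h3 : c * ln (n%:R : R) <= c * (2 * Num.sqrt (n%:R : R)) by apply: ler_wpM2l.
rewrite -[X in _ <= X]qq expr2; nra.
Qed.

Lemma lnln_cvg (R : realType) : (fun n : nat => ln (ln (n%:R : R))) @ \oo --> +oo.
Proof.
apply/cvgryPge => A.
exists (Num.Def.trunc (expR (expR A))).+1 => // n /= hn.
have nx : expR (expR A) < n%:R.
  apply: (lt_le_trans (truncnS_gt _)); by rewrite ler_nat.
have e0 : 0 < expR (expR A) by rewrite expR_gt0.
have h1 : expR A <= ln (n%:R : R).
  rewrite -[X in X <= _]expRK ler_ln ?posrE //; [exact: ltW | exact: lt_trans nx].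
rewrite -[X in X <= _]expRK ler_ln ?posrE ?expR_gt0 //.
exact: lt_le_trans (expR_gt0 _) h1.
Qed.

Theorem lemma6 (R : realType) (s k : nat) (hs : (1 <= s)%N) (hk : (1 <= k)%N) :
  (* (a) *)
  (forall (t : nat -> R) (P : nat -> nat) (beta : nat -> R),
     (forall n, (s <= P n)%N) ->
     (forall n, 0 <= t n <= 1) ->
     (forall n, (0 < n)%N -> scaling_eq s k n (t n) (P n) (beta n)) ->
     beta @ \oo --> -oo ->
     exists (tt : nat -> R) (PP : nat -> nat) (bb : nat -> R),
       (forall n, (s <= PP n)%N) /\ (forall n, 0 <= tt n <= 1) /\
       [/\ forall n, (0 < n)%N -> scaling_eq s k n (tt n) (PP n) (bb n),
           bb @ \oo --> -oo,
           (exists C : R, exists N : nat, forall n : nat, (N <= n)%N -> `|bb n| <= C * ln (ln (n%:R))) &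
           forall n, coupling_subgraph (Hs_pmf s n (t n) (P n))
                                       (Hs_pmf s n (tt n) (PP n))])
  /\
  (* (b) *)
  (forall (t : nat -> R) (P : nat -> nat) (beta : nat -> R),
     (forall n, (s <= P n)%N) ->
     (forall n, 0 <= t n <= 1) ->
     (forall n, (0 < n)%N -> scaling_eq s k n (t n) (P n) (beta n)) ->
     beta @ \oo --> +oo ->
     exists (th : nat -> R) (PH : nat -> nat) (bh : nat -> R),
       (forall n, (s <= PH n)%N) /\ (forall n, 0 <= th n <= 1) /\
       [/\ forall n, (0 < n)%N -> scaling_eq s k n (th n) (PH n) (bh n),
           bh @ \oo --> +oo,
           (exists C : R, exists N : nat, forall n : nat, (N <= n)%N -> `|bh n| <= C * ln (ln (n%:R))) &
           forall n, coupling_subgraph (Hs_pmf s n (th n) (PH n))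
                                       (Hs_pmf s n (t n) (P n))]).
Proof.
have lnln := @lnln_cvg R.
have [N2 _ HN2] : \forall n \near \oo, 0 <= ln (ln (n%:R : R)) by move/cvgryPge: lnln; apply.
split.
- move=> t P beta hP ht hsc hb.
  pose y n : R := n%:R * (P n)%:R ^+ s / s`!%:R.
  pose bb n := Num.max (beta n) (Num.min (- ln (ln (n%:R : R))) (y n - LL k n)).
  have hbb : forall n, (0 < n)%N -> 0 <= LL k n + bb n <= y n.
    move=> n n0; have /andP [h0 h1] := scal_bounds n0 (hsc n n0) (ht n).
    have {}h1 : LL k n + beta n <= y n := h1.
    have hb1 : beta n <= bb n by rewrite le_max lexx.
    have hb2 : bb n <= y n - LL k n.
      rewrite ge_max; apply/andP; split; first lra.
      by rewrite ge_min lexx orbT.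
    apply/andP; split; lra.
  have [tt [t01 tsc tmono _ t0]] := construct hs hP ht hsc hbb.
  exists tt, P, bb; split; first exact: hP.
  split; first exact: t01.
  split.
  + exact: tsc.
  + apply/cvgrNyPle => A.
    have h1 : \forall n \near \oo, beta n <= A by move/cvgrNyPle: hb; apply.
    have h2 : \forall n \near \oo, - A <= ln (ln (n%:R : R)) by move/cvgryPge: lnln; apply.
    apply: (filterS2 _ _ h1 h2) => n hn1 hn2.
    rewrite ge_max hn1 /= ge_min; apply/orP; left; lra.
  + have [N1 _ HN1] : \forall n \near \oo, beta n <= 0 by move/cvgrNyPle: hb; apply.
    have [N3 HN3] := @ev_ln R (k%:R * s`!%:R) (mulr_ge0 (ler0n _ _) (ler0n _ _)).
    exists 1, (N1 + N2 + N3 + 2)%N => n hn.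
    have hn1 : beta n <= 0 by apply: HN1 => /=; lia.
    have l2 : 0 <= ln (ln (n%:R : R)) by apply: HN2 => /=; lia.
    have l3 := HN3 n ltac:(lia).
    have l0 : 0 < ln (n%:R : R) by apply: ln_gt0; rewrite ltr1n; lia.
    have l1 : ln (ln (n%:R : R)) <= ln (n%:R : R) by have := ln_le_sub1 l0; lra.
    have F0 : 0 < s`!%:R :> R by rewrite ltr0n fact_gt0.
    have hk' : k%:R = (k.-1)%:R + 1 :> R by rewrite -[k in LHS](prednK hk) -addn1 natrD.
    have ha : (k.-1)%:R * ln (ln (n%:R : R)) <= (k.-1)%:R * ln (n%:R : R) by apply: ler_wpM2l.
    have hc : (k.-1)%:R * ln (n%:R : R) + ln (n%:R : R) <= n%:R / s`!%:R.
      rewrite ler_pdivlMr //; move: l3; rewrite hk'.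
      by have -> : ((k.-1)%:R + 1) * s`!%:R * ln (n%:R : R) = ((k.-1)%:R * ln (n%:R : R) + ln (n%:R : R)) * s`!%:R by ring.
    have hd : n%:R / s`!%:R <= y n.
      rewrite /y mulrAC; rewrite -[X in X <= _]mulr1; apply: ler_wpM2l.
        by rewrite mulr_ge0 ?invr_ge0 ?ler0n ?ltW.
      by rewrite exprn_ege1 // ler1n; exact: leq_trans hs (hP n).
    have main : - ln (ln (n%:R : R)) <= y n - LL k n by rewrite /LL; lra.
    rewrite mul1r ler_norml; apply/andP; split.
      by rewrite le_max le_min lexx main orbT.
    rewrite ge_max; apply/andP; split; first lra.
    by rewrite ge_min; apply/orP; left; lra.
  + move=> n; have /andP [tt0 tt1] := t01 n; have /andP [t0' t1'] := ht n.
    have le : t n <= tt n.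
      case: (posnP n) => [->|n0]; first by rewrite t0.
      by apply: tmono n0 _; rewrite le_max lexx.
    exact: coupling_mono.
- move=> t P beta hP ht hsc hb.
  pose y n : R := n%:R * (P n)%:R ^+ s / s`!%:R.
  pose bh n := Num.min (beta n) (Num.max (ln (ln (n%:R : R))) (- LL k n)).
  have hbb : forall n, (0 < n)%N -> 0 <= LL k n + bh n <= y n.
    move=> n n0; have /andP [h0 h1] := scal_bounds n0 (hsc n n0) (ht n).
    have {}h1 : LL k n + beta n <= y n := h1.
    have hb1 : bh n <= beta n by rewrite ge_min lexx.
    have hb2 : - LL k n <= bh n.
      rewrite le_min; apply/andP; split; first lra.
      by rewrite le_max lexx orbT.
    apply/andP; split; lra.
  have [th [t01 tsc _ tmono t0]] := construct hs hP ht hsc hbb.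
  exists th, P, bh; split; first exact: hP.
  split; first exact: t01.
  split.
  + exact: tsc.
  + apply/cvgryPge => A.
    have h1 : \forall n \near \oo, A <= beta n by move/cvgryPge: hb; apply.
    have h2 : \forall n \near \oo, A <= ln (ln (n%:R : R)) by move/cvgryPge: lnln; apply.
    apply: (filterS2 _ _ h1 h2) => n hn1 hn2.
    by rewrite le_min hn1 /= le_max hn2.
  + have [N1 _ HN1] : \forall n \near \oo, 0 <= beta n by move/cvgryPge: hb; apply.
    exists 1, (N1 + N2 + 1)%N => n hn.
    have hn1 : 0 <= beta n by apply: HN1 => /=; lia.
    have l2 : 0 <= ln (ln (n%:R : R)) by apply: HN2 => /=; lia.
    have l0 : 0 <= ln (n%:R : R) by apply: ln_ge0; rewrite ler1n; lia.
    have L0 : 0 <= (LL k n : R).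
      have := mulr_ge0 (ler0n R k.-1) l2; rewrite /LL; lra.
    rewrite mul1r ler_norml; apply/andP; split.
      rewrite le_min; apply/andP; split; first lra.
      rewrite le_max; apply/orP; left; lra.
    rewrite ge_min; apply/orP; right.
    rewrite ge_max lexx /=; lra.
  + move=> n; have /andP [tt0 tt1] := t01 n; have /andP [t0' t1'] := ht n.
    have le : th n <= t n.
      case: (posnP n) => [->|n0]; first by rewrite t0.
      by apply: tmono n0 _; rewrite ge_min lexx.
    exact: coupling_mono.
Qed.
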